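(* Let $m$ be a positive integer and $n=m(m+1)/2$, and write $\prod_{i=1}^m(1-X^i)=\sum_{i=0}^n c_iX^i$. The matrix $\mathsf R$ with rows indexed by positive integers $k$, columns indexed by non-empty subsets $S\subseteq[1,m]$, and $(k,S)$ entry $r(k,S)$, has rank $n$ over $\mathbb{Q}$. Moreover, for all $k>n$ and all non-empty $S\subseteq[1,m]$, $$r(k,S)=-\sum_{j=k-n}^{k-1}c_{k-j}\,r(j,S).$$
   Context: $r(k,S)$ is the number of partitions $\lambda$ of $k$ such that every part of $\lambda$ lies in $S$ and every element of $S$ occurs as a part of $\lambda$ (i.e. the set of distinct parts of $\lambda$ is exactly $S$). $[1,m]=\{1,\dots,m\}$. *)

(* Defs.v *)
From HB Require Import structures.
From mathcomp Require Import all_boot all_order all_algebra.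
Set Implicit Arguments. Unset Strict Implicit. Unset Printing Implicit Defensive.
Import Order.TTheory GRing.Theory Num.Theory.

(* A partition of k is represented, zero-padded, as a nonincreasing
   k-tuple of naturals <= k summing to k; its parts are its nonzero
   entries (a partition of k has at most k parts, each <= k). *)
Definition parts_of k (t : k.-tuple 'I_k.+1) : seq nat :=
  [seq x <- map val t | x != 0%N].

Definition is_partition_of k (t : k.-tuple 'I_k.+1) : bool :=
  sorted geq (map val t) && (sumn (map val t) == k).

Definition r (k : nat) (S : seq nat) : nat :=
  #|[set t : k.-tuple 'I_k.+1 | is_partition_of t &&
      (all (fun x => x \in S) (parts_of t) && all (fun s => s \in parts_of t) S)]|.

(* Nonempty subsets of [1,m], as subsets of {0,...,m} avoiding 0. *)
Definition nesub (m : nat) (S : {set 'I_m.+1}) : bool :=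
  (S != set0) && (S \subset [set i : 'I_m.+1 | 0 < val i]).

Definition NESub (m : nat) := {S : {set 'I_m.+1} | nesub S}.

Definition Snat (m : nat) (S : {set 'I_m.+1}) : seq nat := [seq val i | i in S].

(* The first N rows (k = 1..N) of the matrix R, columns enumerating NESub m. *)
Definition Rmat (m N : nat) : 'M[rat]_(N, #|{: NESub m}|) :=
  \matrix_(i < N, j < #|{: NESub m}|) ((r i.+1 (Snat (val (enum_val j))))%:R)%R.

Definition cpoly (m : nat) : {poly int} := \prod_(1 <= i < m.+1) (1 - 'X^i)%R.

(* Main.v *)
Require Import Defs.
From HB Require Import structures.
From mathcomp Require Import all_boot all_order all_algebra.
Import Order.TTheory GRing.Theory Num.Theory.


Definition validp k (p : seq nat) :=
  all (fun x => 0 < x) p && sorted geq p && (sumn p == k).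
Definition condS (S p : seq nat) :=
  all (fun x => x \in S) p && all (fun s => s \in p) S.
Definition lk k := map (@parts_of k)
  (filter (@is_partition_of k) (enum {: k.-tuple 'I_k.+1})).

Lemma r_lk k S : r k S = count (condS S) (lk k).
Proof.
rewrite /r cardsE cardE /lk count_map count_filter -size_filter.
rewrite /enum_mem !size_filter count_filter.
apply: eq_count=> t /=; rewrite /condS.
rewrite !unfold_in /=.
by rewrite andbT [RHS]andbC.
Qed.

Lemma geq_trans : transitive geq.
Proof. by move=> x y z /= h1 h2; apply: leq_trans h2 h1. Qed.

Lemma sorted_split (s : seq nat) : sorted geq s ->
  s = [seq x <- s | x != 0] ++ nseq (count_mem 0 s) 0.
Proof.
elim: s => [|x s IH] //= hs.
have hs' : sorted geq s := path_sorted hs.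
case: (eqVneq x 0) hs => [->|hx] hs /=.
  have ha : all (fun y => y == 0) s.
    move: hs; rewrite /= (path_sortedE geq_trans) => /andP[ha _].
    by apply/allP=> y /(allP ha) /=; rewrite leqn0.
  have fil : [seq x0 <- s | x0 != 0] = [::].
    rewrite (eq_in_filter (a2 := pred0)) ?filter_pred0 //.
    by move=> y /(allP ha) /= ->.
  by rewrite {1}(IH hs') fil.
by rewrite add0n {1}(IH hs').
Qed.

Lemma size_split (s : seq nat) :
  size s = size [seq x <- s | x != 0] + count_mem 0 s.
Proof.
rewrite size_filter -(count_predC (fun x => x != 0) s) .
congr (_ + _); apply: eq_count=> x /=; by rewrite negbK eq_sym.
Qed.

Lemma parts_inj k : {in is_partition_of (k:=k) &, injective (@parts_of k)}.
Proof.
move=> t1 t2; rewrite !unfold_in => /andP[s1 _] /andP[s2 _] e.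
apply: val_inj; apply: (inj_map val_inj).
rewrite (@sorted_split _ s1) (@sorted_split _ s2).
have c : forall t : k.-tuple 'I_k.+1, count_mem 0 (map val t) = k - size (parts_of t).
  move=> t; have h := size_split (map val t); rewrite size_map size_tuple in h.
  apply/eqP; rewrite -(eqn_add2l (size (parts_of t))) subnKC; first by rewrite -h.
  by rewrite [X in _ <= X]h leq_addr.
rewrite !c; by move: e; rewrite /parts_of => ->.
Qed.

Lemma mem_leq_sumn (s : seq nat) x : x \in s -> x <= sumn s.
Proof.
elim: s => [|y s IH] //=; rewrite inE => /orP[/eqP->|/IH h]; first exact: leq_addr.
by apply: leq_trans h (leq_addl _ _).
Qed.

Lemma size_leq_sumn (s : seq nat) : all (fun x => 0 < x) s -> size s <= sumn s.
Proof. elim: s => [|y s IH] //= /andP[hy /IH h]; by rewrite -add1n leq_add. Qed.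

Lemma validp_parts k (t : k.-tuple 'I_k.+1) : is_partition_of t -> validp k (parts_of t).
Proof.
rewrite /is_partition_of /validp /parts_of => /andP[hs /eqP hsum].
apply/andP; split; first (apply/andP; split).
- by apply/allP=> x; rewrite mem_filter lt0n => /andP[].
- by apply: sorted_filter=> //; exact: geq_trans.
- by rewrite -[X in _ == X]hsum [in X in _ == X](@sorted_split _ hs) sumn_cat sumn_nseq ?muln0 ?mul0n addn0.
Qed.

Lemma mem_lk k p : (p \in lk k) = validp k p.
Proof.
apply/idP/idP.
  by case/mapP=> t; rewrite mem_filter => /andP[ht _] ->; exact: validp_parts.
case/andP=> /andP[hpos hsort] /eqP hsum.
set s := p ++ nseq (k - size p) 0.
have hsz : size p <= k by rewrite -hsum; exact: size_leq_sumn.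
have hs : size s = k by rewrite size_cat size_nseq subnKC.
have hle : all (fun x => x <= k) s.
  apply/allP=> x; rewrite mem_cat => /orP[/mem_leq_sumn|]; first by rewrite hsum.
  by rewrite mem_nseq => /andP[_ /eqP->].
have hsz' : size (map (@inord k) s) == k by rewrite size_map hs.
have hv : map val (Tuple hsz') = s.
  rewrite /= -map_comp -{2}(map_id s); apply/eq_in_map=> x /(allP hle) hx /=.
  by rewrite inordK.
have hparts : parts_of (Tuple hsz') = p.
  rewrite /parts_of hv filter_cat.
  rewrite (eq_in_filter (a1 := fun x => x != 0) (a2 := predT) (s := p)); last first.
    by move=> x /(allP hpos); rewrite lt0n.
  rewrite filter_predT (eq_in_filter (a2 := pred0)) ?filter_pred0 ?cats0 //.
  by move=> x; rewrite mem_nseq => /andP[_ /eqP->].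
apply/mapP; exists (Tuple hsz') => //.
rewrite mem_filter mem_enum andbT /is_partition_of hv.
apply/andP; split.
  have hz : forall y j, path geq y (nseq j 0).
    by move=> y j; elim: j y => [|j IH] y //=; rewrite IH andbT.
  rewrite /s; case: (p) hsort => [|x p'] hsort.
    by case: (k - 0) => [|j] //=; apply: hz.
  by rewrite /= cat_path; apply/andP; split; [exact: hsort | exact: hz].
by rewrite /s sumn_cat sumn_nseq ?muln0 ?mul0n addn0 hsum.
Qed.

Lemma lk_uniq k : uniq (lk k).
Proof.
rewrite /lk map_inj_in_uniq; first by apply: filter_uniq; apply: enum_uniq.
move=> t1 t2; rewrite !mem_filter => /andP[h1 _] /andP[h2 _]; exact: parts_inj.
Qed.


Lemma r_nil k : r k [::] = (k == 0).
Proof.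
rewrite r_lk (eq_count (a2 := pred1 [::])); last first.
  by case=> [|x p] //=; rewrite /condS /= andbT.
rewrite (count_uniq_mem _ (lk_uniq k)) mem_lk /validp /= eq_sym.
by case: (k == 0).
Qed.

Lemma mem_map_cons (s x : nat) p F :
  (x :: p \in map (cons s) F) = (x == s) && (p \in F).
Proof.
case: (eqVneq x s) => [->|hx] /=; first by rewrite mem_map //; move=> a b [].
by apply/mapP=> -[q _ [e _]]; rewrite e eqxx in hx.
Qed.

Lemma key (S : seq nat) (s : nat) (sS : s \in S) (hS : forall x, x \in S -> 0 < x <= s) k x p :
  let S' := [seq x <- S | x != s] in
  condS S (x :: p) && validp k (x :: p) =
  [&& x == s, s <= k, (condS S p || condS S' p) & validp (k - s) p].
Proof.
move=> S'; rewrite /condS /validp.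
apply/idP/idP.
  case/andP=> /andP[/= /andP[xS pS] SP] /andP[/andP[/= /andP[x0 ppos] hpath] /eqP hsum].
  move: hpath; rewrite (path_sortedE geq_trans) => /andP[hle hsort].
  have xs : x <= s by case/andP: (hS _ xS).
  have sxp := allP SP s sS.
  have sx : s <= x.
    move: sxp; rewrite inE => /orP[/eqP->//|/(allP hle)] //.
  have exs : x = s by apply/eqP; rewrite eqn_leq xs sx.
  subst x.
  rewrite eqxx -hsum leq_addr addKn eqxx ppos hsort /= andbT.
  case: (boolP (s \in p)) => sp.
    apply/orP; left; rewrite pS /=; apply/allP=> y yS; move: (allP SP y yS).
    by rewrite inE => /orP[/eqP->|].
  apply/orP; right; apply/andP; split.
    apply/allP=> y yp; rewrite /S' mem_filter (allP pS y yp) andbT.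
    by apply: contraNneq sp => <-.
  apply/allP=> y; rewrite /S' mem_filter => /andP[ys yS]; move: (allP SP y yS).
  by rewrite inE (negbTE ys).
case/and4P=> /eqP-> sk hc /andP[/andP[ppos hsort] /eqP hsum].
have pS : all (fun x => x \in S) p.
  case/orP: hc => /andP[h _] //; apply/allP=> y /(allP h).
  by rewrite /S' mem_filter => /andP[].
have s0 : 0 < s by case/andP: (hS _ sS).
rewrite /= sS pS /= s0 ppos /= (path_sortedE geq_trans) hsort andbT.
rewrite hsum subnKC // eqxx !andbT; apply/andP; split.
  apply/allP=> y yS; rewrite inE; case: (eqVneq y s) => //= ys.
  case/orP: hc => /andP[_ h]; first exact: (allP h).
  by apply: (allP h); rewrite /S' mem_filter ys.
apply/allP=> y /(allP pS) yS; by case/andP: (hS y yS).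
Qed.

Lemma r_rec (S : seq nat) (s : nat) (sS : s \in S) (hS : forall x, x \in S -> 0 < x <= s) k :
  r k S = if s <= k then r (k - s) S + r (k - s) [seq x <- S | x != s] else 0.
Proof.
set S' := [seq x <- S | x != s].
rewrite !r_lk.
set F := [seq p <- lk (k - s) | condS S p || condS S' p].
have hperm : perm_eq [seq q <- lk k | condS S q]
               (if s <= k then map (cons s) F else [::]).
  apply: uniq_perm.
  - exact: filter_uniq (lk_uniq k).
  - case: (s <= k) => //; rewrite map_inj_uniq ?filter_uniq ?lk_uniq //.
    by move=> a b [].
  move=> q; rewrite mem_filter mem_lk.
  case: q => [|x p].
    rewrite /condS /=.
    have -> : all (fun y => y \in [::]) S = false by apply/negbTE; apply/allPn; exists s.
    by case: (s <= k) => //=; symmetry; apply/negbTE/mapP => -[?].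
  rewrite (key _ _ sS hS); case: (s <= k); rewrite ?andbF // mem_map_cons /F mem_filter mem_lk.
  by [].
rewrite -size_filter (perm_size hperm).
case: (s <= k) => //; rewrite size_map size_filter.
have h0 : count (predI (condS S) (condS S')) (lk (k - s)) = 0.
  apply/eqP; rewrite -leqn0 leqNgt -has_count; apply/hasP=> -[p _ /= /andP[h1 h2]].
  move: h1 h2; rewrite /condS => /andP[_ /allP h1] /andP[/allP h2 _].
  by move: (h2 s (h1 s sS)); rewrite /S' mem_filter eqxx.
by rewrite -count_predUI h0 addn0.
Qed.


Lemma exists_max (S : seq nat) : S != [::] -> exists2 s, s \in S & forall x, x \in S -> x <= s.
Proof.
elim: S => [|y S IH] // _; case: (eqVneq S [::]) => [->|/IH [s sS hs]].
  by exists y; rewrite ?inE // => x; rewrite inE => /eqP->.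
case: (leqP s y) => hy.
  exists y; first by rewrite inE eqxx.
  by move=> x; rewrite inE => /orP[/eqP->//|/hs h]; apply: leq_trans h hy.
exists s; first by rewrite inE sS orbT.
by move=> x; rewrite inE => /orP[/eqP->|/hs //]; apply: ltnW.
Qed.

Lemma decomp (S : seq nat) : S != [::] -> uniq S -> all (fun x => 0 < x) S ->
  exists2 s, s \in S & [/\ forall x, x \in S -> 0 < x <= s,
     perm_eq S (s :: [seq x <- S | x != s]),
     uniq [seq x <- S | x != s], all (fun x => 0 < x) [seq x <- S | x != s] &
     size [seq x <- S | x != s] < size S].
Proof.
move=> ne u pos; have [s sS hs] := exists_max _ ne.
exists s => //.
have hp : perm_eq S (s :: [seq x <- S | x != s]).
  by rewrite -(rem_filter s u); exact: perm_to_rem.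
split => //.
- by move=> x xS; rewrite (hs x xS) andbT; exact: (allP pos).
- exact: filter_uniq.
- by apply/allP=> x; rewrite mem_filter => /andP[_ /(allP pos)].
- by rewrite (perm_size hp) /=.
Qed.

Lemma tri (S : seq nat) : uniq S -> all (fun x => 0 < x) S ->
  (forall k, k < sumn S -> r k S = 0) /\ r (sumn S) S = 1.
Proof.
move: {2}(size S) (leqnn (size S)) => n; elim: n S => [|n IH] S.
  rewrite leqn0 size_eq0 => /eqP-> _ _; split; [by case | by rewrite r_nil].
move=> hsz u pos; case: (eqVneq S [::]) => [->|ne]; first by split; [case | rewrite r_nil].
have [s sS [hS hp u' pos' lt]] := decomp _ ne u pos.
set S' := [seq x <- S | x != s] in hp u' pos' lt.
have [IH1 IH2] := IH S' (leq_trans (leq_trans lt hsz) (leqnn _)) u' pos'.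
have hsum : sumn S = s + sumn S' by rewrite (perm_sumn hp).
have s0 : 0 < s by case/andP: (hS s sS).
have z : forall k, k < sumn S -> r k S = 0.
  elim/ltn_ind=> k IHk hk; rewrite (r_rec _ _ sS hS).
  case: (leqP s k) => // sk.
  rewrite IHk ?IH1 //.
  - by rewrite -(ltn_add2l s) subnKC // -hsum.
  - by rewrite ltn_subrL s0 /=; apply: leq_trans s0 sk.
  - by apply: leq_ltn_trans hk; apply: leq_subr.
split=> //; rewrite (r_rec _ _ sS hS) hsum leq_addr addKn z ?IH2 //.
by rewrite hsum -{1}(add0n (sumn S')) ltn_add2r.
Qed.

Local Open Scope ring_scope.

Definition trunc (a : nat -> int) k : {poly int} := \poly_(i < k.+1) a i.
Definition conv (p : {poly int}) (a : nat -> int) k : int := (p * trunc a k)`_k.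

Lemma coefM_agree (p u v : {poly int}) k :
  (forall i, (i <= k)%N -> u`_i = v`_i) -> (p * u)`_k = (p * v)`_k.
Proof. by move=> h; rewrite !coefM; apply: eq_bigr => i _; rewrite h // leq_subr. Qed.

Lemma conv_ext p a b k : (forall i, (i <= k)%N -> a i = b i) -> conv p a k = conv p b k.
Proof.
move=> h; apply: coefM_agree => i hi; by rewrite !coef_poly ltnS hi h.
Qed.

Lemma conv_mul p q a k : conv (p * q) a k = conv p (conv q a) k.
Proof.
rewrite /conv -mulrA; apply: coefM_agree => i hi.
rewrite [in RHS]coef_poly ltnS hi /conv; apply: coefM_agree => j hj.
by rewrite !coef_poly !ltnS hj (leq_trans hj hi).
Qed.

Lemma conv_sub p q a k : conv (p - q) a k = conv p a k - conv q a k.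
Proof. by rewrite /conv mulrBl coefB. Qed.

Lemma conv1 a k : conv 1 a k = a k.
Proof. by rewrite /conv mul1r coef_poly ltnSn. Qed.

Lemma convXn s a k : conv 'X^s a k = if (s <= k)%N then a (k - s)%N else 0.
Proof.
rewrite /conv coefXnM ltnNge; case: (s <= k)%N => //=.
by rewrite coef_poly ltnS leq_subr.
Qed.

Definition delta (s : nat) (i : nat) : int := (i == s)%:R.

Lemma conv_delta0 p k : conv p (delta 0) k = p`_k.
Proof.
rewrite /conv; have -> : trunc (delta 0) k = 1; last by rewrite mulr1.
apply/polyP=> i; rewrite coef_poly coef1 /delta; case: i => //= i; by case: ifP.
Qed.

Definition rZ (S : seq nat) (i : nat) : int := (r i S)%:Z.

Lemma conv_S (S : seq nat) : uniq S -> all (fun x => 0 < x)%N S ->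
  forall k, conv (\prod_(x <- S) (1 - 'X^x)) (rZ S) k = delta (sumn S) k.
Proof.
move: {2}(size S) (leqnn (size S)) => n; elim: n S => [|n IH] S.
  rewrite leqn0 size_eq0 => /eqP-> _ _ k.
  by rewrite big_nil conv1 /rZ r_nil /delta; case: (k == 0)%N.
move=> hsz u pos k; case: (eqVneq S [::]) => [->|ne].
  by rewrite big_nil conv1 /rZ r_nil /delta; case: (k == 0)%N.
have [s sS [hS hp u' pos' lt]] := decomp _ ne u pos.
set S' := [seq x <- S | x != s] in hp u' pos' lt.
have IH' := IH S' (leq_trans (leq_trans lt hsz) (leqnn _)) u' pos'.
have hsum : sumn S = (s + sumn S')%N by rewrite (perm_sumn hp).
rewrite (perm_big _ hp) big_cons /= mulrC conv_mul.
rewrite (@conv_ext _ _ (conv 'X^s (rZ S'))); last first.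
  move=> i _; rewrite conv_sub conv1 !convXn /rZ (r_rec _ _ sS hS).
  case: (s <= i)%N => //=.
  by rewrite PoszD [X in X - _]addrC addrK /S'.
rewrite -(conv_mul _ ('X^s)) mulrC conv_mul convXn hsum /delta.
case: (leqP s k) => sk.
  rewrite IH' /delta; congr (_ %:R).
  by rewrite -(eqn_add2l s) subnKC.
have -> : (k == s + sumn S')%N = false.
  by apply/negbTE; apply: contraTneq sk => ->; rewrite -ltnNge ltnS leq_addr.
by [].
Qed.


Definition nn (m : nat) : nat := (\sum_(1 <= i < m.+1) i)%N.

Lemma nnE m : nn m = ((m * m.+1) %/ 2)%N.
Proof.
rewrite /nn divn2 mulnC.
have -> : (m.+1 * m = m.+1 * m.+1.-1)%N by [].
by rewrite -bin2 -bin2_sum [RHS]big_ltn.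
Qed.

Lemma size_1X (i : nat) : (size ((1 - 'X^i)%R : {poly int}) <= i.+1)%N.
Proof.
apply: leq_trans (size_polyD _ _) _; rewrite size_polyN size_poly1 size_polyXn.
by rewrite geq_max ltnS leqnn andbT.
Qed.

Lemma size_prod1X (s : seq nat) (P : pred nat) :
  (size ((\prod_(i <- s | P i) (1 - 'X^i))%R : {poly int}) <= (\sum_(i <- s | P i) i).+1)%N.
Proof.
elim/big_rec2: _ => [|i a p _ h]; first by rewrite size_poly1.
apply: leq_trans (size_polyMleq _ _) _.
have := leq_add (size_1X i) h; rewrite addSn addnS /= => h2.
by rewrite -subn1 leq_subLR add1n.
Qed.

Lemma sizeQ m : (size (cpoly m) <= (nn m).+1)%N.
Proof. exact: size_prod1X. Qed.

Lemma Q0 m : (cpoly m)`_0 = 1.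
Proof.
rewrite -horner_coef0 /cpoly horner_prod; apply: big1_seq => i.
rewrite mem_index_iota => /andP[_ /andP[hi _]].
by rewrite !hornerE expr0n; case: i hi.
Qed.

Lemma convQ m (S : seq nat) : uniq S -> all (fun x => 0 < x <= m)%N S ->
  forall k, (nn m < k)%N -> conv (cpoly m) (rZ S) k = 0.
Proof.
move=> u hS k hk.
have pos : all (fun x => 0 < x)%N S by apply/allP=> x /(allP hS) /andP[].
set P := fun i : nat => i \in S.
have hperm : perm_eq [seq i <- index_iota 1 m.+1 | P i] S.
  apply: uniq_perm; first by rewrite filter_uniq ?iota_uniq.
    exact: u.
  move=> x; rewrite mem_filter mem_index_iota /P.
  case: (boolP (x \in S)) => //= xS; by case/andP: (allP hS x xS) => -> /=; rewrite ltnS.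
set B := \prod_(1 <= i < m.+1 | ~~ P i) (1 - 'X^i) : {poly int}.
have hQ : cpoly m = B * \prod_(x <- S) (1 - 'X^x).
  rewrite /cpoly (bigID P) /= mulrC; congr (_ * _).
  by rewrite -big_filter (perm_big _ hperm).
have hn : (\sum_(1 <= i < m.+1 | ~~ P i) i + sumn S)%N = nn m.
  rewrite /nn [in RHS](bigID P) /= [in RHS]addnC; congr addn.
  by rewrite -big_filter (perm_big _ hperm) sumnE.
rewrite hQ conv_mul (@conv_ext _ _ (conv 'X^(sumn S) (delta 0))); last first.
  move=> i _; rewrite conv_S // convXn /delta.
  case: (leqP (sumn S) i) => h.
    by rewrite subn_eq0; congr (_ %:R); rewrite eqn_leq h andbT.
  by case: eqP h => // ->; rewrite ltnn.
rewrite -conv_mul conv_delta0 nth_default //.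
apply: leq_trans (size_polyMleq _ _) _.
rewrite size_polyXn addnS /=.
apply: leq_trans hk; rewrite -hn -addSn leq_add2r.
exact: size_prod1X.
Qed.

Lemma recurrence m (S : seq nat) : uniq S -> all (fun x => 0 < x <= m)%N S ->
  forall k, (nn m < k)%N ->
  (r k S)%:Z = - \sum_(k - nn m <= j < k) (cpoly m)`_(k - j) * (r j S)%:Z.
Proof.
move=> u hS k hk.
have h0 := @convQ m S u hS k hk.
move: h0; rewrite /conv coefM big_ord_recl Q0 mul1r subn0.
rewrite coef_poly ltnSn /rZ => /eqP; rewrite addr_eq0 => /eqP ->.
congr (- _).
rewrite -(big_mkord xpredT (fun j => (cpoly m)`_j.+1 * (trunc (rZ S) k)`_(k - j.+1))).
rewrite big_nat_rev /= add0n.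
have nk : (nn m <= k)%N by apply: ltnW.
have hF : forall i, (0 <= i < k)%N -> (cpoly m)`_(k - i.+1).+1 * (trunc (rZ S) k)`_(k - (k - i.+1).+1)
     = (cpoly m)`_(k - i) * (r i S)%:Z.
  move=> i /andP[_ hi]; rewrite -subSn // subSS subKn ?(ltnW hi) //.
  by rewrite coef_poly ltnS (ltnW hi).
rewrite (eq_big_nat _ _ hF).
rewrite (@big_cat_nat _ _ _ (k - nn m)) ?leq0n ?leq_subr //=.
rewrite [X in X + _]big_nat_cond [X in X + _]big1 ?add0r //.
move=> j /andP[/andP[_ hj] _].
rewrite nth_default ?mul0r //.
apply: leq_trans (sizeQ m) _.
by rewrite ltn_subRL addnC -ltn_subRL.
Qed.


Lemma r_eq_mem k (S1 S2 : seq nat) : S1 =i S2 -> r k S1 = r k S2.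
Proof.
move=> e; rewrite /r; apply: eq_card => t; rewrite !inE.
by rewrite (eq_all_r e) (eq_all (a2 := fun x => x \in S2)) // => x; rewrite e.
Qed.

Lemma Snat_uniq m (S : {set 'I_m.+1}) : uniq (Snat S).
Proof. by rewrite /Snat map_inj_uniq ?enum_uniq //; exact: val_inj. Qed.

Lemma Snat_bound m (S : {set 'I_m.+1}) : nesub S -> all (fun x => 0 < x <= m)%N (Snat S).
Proof.
case/andP=> _ /subsetP hS; apply/allP=> x /mapP[i]; rewrite mem_enum => iS ->.
by move: (hS i iS); rewrite inE => ->; rewrite -ltnS ltn_ord.
Qed.

Lemma subset_sum m t : (0 < t <= nn m)%N ->
  exists S : seq nat, [/\ uniq S, all (fun x => 0 < x <= m)%N S & sumn S = t].
Proof.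
elim: m t => [|m IH] t.
  by rewrite /nn big_geq // leqn0 => /andP[t0 /eqP t00]; rewrite t00 in t0.
case/andP=> t0 htm.
case: (leqP t m.+1) => h1.
  by exists [:: t]; rewrite /= t0 h1 addn0.
have h2 : (0 < t - m.+1 <= nn m)%N.
  rewrite subn_gt0 h1 /= leq_subLR addnC; move: htm.
  by rewrite /nn big_nat_recr.
have [S [uS bS sS]] := IH _ h2.
exists (m.+1 :: S); split.
- rewrite /= uS ?andbT; apply/negP=> /(allP bS) /andP[_]; by rewrite ltnn.
- rewrite /= ltnSn /=; apply/allP=> x /(allP bS) /andP[-> /= h]; exact: leqW.
- by rewrite /= sS subnKC // ltnW.
Qed.

Definition w m k : 'rV[rat]_#|{: NESub m}| :=
  \row_(j < #|{: NESub m}|) ((r k (Snat (val (enum_val j))))%:R : rat).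

Lemma row_Rmat m N (i : 'I_N) : row i (Rmat m N) = w m i.+1.
Proof. by apply/rowP=> j; rewrite !mxE. Qed.

Lemma intr_nat (n : nat) : ((n%:Z)%:~R : rat) = n%:R.
Proof. by []. Qed.

Lemma w_rec m k : (nn m < k)%N ->
  w m k = \sum_(k - nn m <= j < k) ((- (cpoly m)`_(k - j))%:~R : rat) *: w m j.
Proof.
move=> hk; apply/rowP=> j; rewrite summxE mxE.
set S := val (enum_val j).
have hS : nesub S := valP (enum_val j).
have := @recurrence m (Snat S) (@Snat_uniq m S) (@Snat_bound m S hS) k hk.
move/(congr1 (fun z : int => (z%:~R : rat))); rewrite intr_nat => ->.
rewrite rmorphN rmorph_sum -sumrN; apply: eq_bigr => l _.
by rewrite !mxE rmorphM /= rmorphN mulNr.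
Qed.


Lemma w_sub m k : (0 < k)%N -> (w m k <= Rmat m (nn m))%MS.
Proof.
elim/ltn_ind: k => k IH k0.
case: (leqP k (nn m)) => hk.
  have hi : (k.-1 < nn m)%N by rewrite prednK.
  have := row_sub (Ordinal hi) (Rmat m (nn m)).
  by rewrite row_Rmat /= prednK.
rewrite (@w_rec m k hk) big_seq_cond; apply: summx_sub => j.
rewrite mem_index_iota andbT => /andP[h1 h2]; apply: scalemx_sub; apply: IH => //.
by apply: leq_trans h1; rewrite subn_gt0.
Qed.

Lemma rank_le m N : (\rank (Rmat m N) <= nn m)%N.
Proof.
apply: leq_trans (rank_leq_row (Rmat m (nn m))); apply: mxrankS.
by apply/row_subP=> i; rewrite row_Rmat; apply: w_sub.
Qed.

Lemma hker m (u : 'rV[rat]_(nn m)) : u *m Rmat m (nn m) = 0 -> u = 0.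
Proof.
move=> hu; apply/rowP=> i; rewrite mxE.
suff H : forall d (i : 'I_(nn m)), (nn m - i)%N = d -> u 0 i = 0 by apply: (H _ i).
elim/ltn_ind=> d IH {}i hd.
have ht : (0 < i.+1 <= nn m)%N by rewrite ltn_ord.
have [S [uS bS sS]] := @subset_sum m _ ht.
have pos : all (fun x => 0 < x)%N S by apply/allP=> x /(allP bS) /andP[].
have [x0 x0S] : exists x, x \in S.
  by case: (S) sS => [|x S'] //= _; exists x; rewrite inE eqxx.
set A := [set x : 'I_m.+1 | val x \in S].
have memA : Snat A =i S.
  move=> x; apply/mapP/idP.
    by case=> y; rewrite mem_enum inE => yS ->.
  move=> xS; have vx : val (inord x : 'I_m.+1) = x.
    by apply: inordK; rewrite ltnS; case/andP: (allP bS x xS).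
  by exists (inord x); rewrite ?mem_enum ?inE vx.
have hA : nesub A.
  apply/andP; split.
    have vx : val (inord x0 : 'I_m.+1) = x0.
      by apply: inordK; rewrite ltnS; case/andP: (allP bS x0 x0S).
    by apply/set0Pn; exists (inord x0); rewrite inE vx.
  by apply/subsetP=> x; rewrite !inE => /(allP pos).
pose a : NESub m := exist _ A hA.
have hcol : (u *m Rmat m (nn m)) 0 (enum_rank a) = 0 by rewrite hu mxE.
move: hcol; rewrite !mxE.
have [tri0 tri1] := tri S uS pos.
have hr : forall k, r k (Snat (val (enum_val (enum_rank a)))) = r k S.
  by move=> k; rewrite enum_rankK /=; apply: r_eq_mem.
rewrite (bigD1 i) //= big1 ?addr0.
  by rewrite !mxE hr -sS tri1 mulr1.
move=> l hl; rewrite !mxE hr.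
case: (ltngtP l i) => hli.
- by rewrite tri0 ?mulr0 // sS.
- rewrite (IH (nn m - l)%N) ?mul0r //.
  by rewrite -hd ltn_sub2l.
- by move: hl; rewrite (val_inj hli) eqxx.
Qed.

Local Close Scope ring_scope.
Theorem corollaryA (m : nat) (hm : (0 < m)%N) :
  let n := (m * m.+1) %/ 2 in
  ((forall N : nat, (\rank (Rmat m N) <= n)%N) /\
   (exists N : nat, \rank (Rmat m N) = n)) /\
  (forall (k : nat) (S : {set 'I_m.+1}), (n < k)%N -> nesub S ->
     ((r k (Snat S))%:Z =
      - \sum_(k - n <= j < k) (cpoly m)`_(k - j) * (r j (Snat S))%:Z)%R).
Proof.
move=> n; rewrite /n -nnE; split; first split.
- by move=> N; apply: rank_le.
- exists (nn m); apply/eqP; rewrite -/(row_free _) -kermx_eq0.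
  apply/eqP/row_matrixP=> i; rewrite row0; apply: hker.
  by rewrite -row_mul mulmx_ker row0.
- move=> k S hk hS.
  exact: (@recurrence m (Snat S) (@Snat_uniq m S) (@Snat_bound m S hS) k hk).
Qed.
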